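(* Let $G=(V,E)$ be a transport graph with $n$ nodes and $m$ edges, let $A\in\mathbb{R}^{m\times n}$ be its incidence matrix, let $g\in\mathbb{R}^n$ be a vector of positive node weights, and let $c\in\mathbb{R}^m$ be the vector whose entries are all $0$ except the entry corresponding to the source/sink edge, which equals $1$. Consider the combinatorial continuous maximum flow (CCMF) problem $$\max_{F\in\mathbb{R}^m} c^TF \quad\text{s.t.}\quad A^TF=0,\qquad |A^T|F^2\le g^2 .$$ Its Lagrangian dual problem, with multipliers $\lambda\in\mathbb{R}^n$ (for the inequality constraints) and $\nu\in\mathbb{R}^n$ (for the equality constraints), is $$\min_{\lambda\in\mathbb{R}^n,\ \nu\in\mathbb{R}^n}\ \lambda^Tg^2+\frac14\Big(\mathbf{1}^m\cdot/(|A|\lambda)\Big)^T\Big((c+A\nu)^2\Big)\quad\text{s.t.}\quad \lambda\ge 0,$$ equivalently, in summation form, $$\min_{\lambda,\nu}\ \sum_{v_i\in V}\lambda_i g_i^2+\frac14\sum_{e_{ij}\in E\setminus\{e_{st}\}}\frac{(\nu_i-\nu_j)^2}{\lambda_i+\lambda_j}+\frac14\frac{(\nu_s-\nu_t-1)^2}{\lambda_s+\lambda_t}\quad\text{s.t. }\lambda_i\ge0\ \forall i\in V.$$ Moreover, an optimal solution $(F^*,\lambda^*,\nu^* )$ satisfies $$\max_F c^TF=c^TF^*=2{\lambda^*}^Tg^2,$$ and the $n$ equalities $$\lambda^*\cdot|A^T|\Big((c+A\nu^* )\cdot/(|A|\lambda^* )\Big)^2=4\,\lambda^*\cdot g^2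 .$$
   Context: A transport graph $G=(V,E)$ is a graph containing two distinguished nodes, a source $s$ and a sink $t$, with additional edges linking some nodes to the source and some to the sink, and an edge $e_{st}$ joining source and sink (the ''source/sink edge''); $n=|V|$ and $m=|E|$ count all nodes and edges including these. Each edge $e_{ij}$ is oriented from $v_i$ to $v_j$, and a flow is a vector $F\in\mathbb{R}^m$ with $F_{ij}$ the flow on $e_{ij}$ (positive meaning from $v_i$ to $v_j$). The incidence matrix $A\in\mathbb{R}^{m\times n}$ has $A_{e_{ij},v_k}=+1$ if $k=i$, $-1$ if $k=j$, and $0$ otherwise; $|A|$ denotes the matrix of entrywise absolute values. For vectors, $v^2=v\cdot v$ is the entrywise (Hadamard) square, ''$\cdot$'' is the entrywise product, $u\cdot/v=[u_1/v_1,\dots,u_k/v_k]$ is entrywise division, $\mathbf{1}^k$ is the all-ones vector of length $k$, and inequalities between vectors are entrywise. *)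

(* Defs.v *)
From HB Require Import structures.
From mathcomp Require Import all_boot all_order all_algebra.
From mathcomp Require Import all_classical all_reals ereal.
Set Implicit Arguments. Unset Strict Implicit. Unset Printing Implicit Defensive.
Import Order.TTheory GRing.Theory Num.Theory.
Local Open Scope ring_scope.

(* Edge e is oriented from
   [tail e] to [head e] (no self-loops).  [src]/[snk] are the source s and the
   sink t, and [est] is the source/sink edge e_st joining them. *)
Record transport_graph (n m : nat) := TransportGraph {
  tail : 'I_m -> 'I_n;
  head : 'I_m -> 'I_n;
  src : 'I_n;
  snk : 'I_n;
  est : 'I_m;
  tail_neq_head : forall e, tail e != head e;
  src_neq_snk : src != snk;
  est_joins : (tail est == src) && (head est == snk)
           || (tail est == snk) && (head est == src)
}.

Section Defs.
Variable R : realType.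
Variables n m : nat.

Definition incidence (G : transport_graph n m) : 'M[R]_(m, n) :=
  \matrix_(e < m, k < n)
    (if k == tail G e then 1 else if k == head G e then -1 else 0).

Definition cvec (G : transport_graph n m) : 'cV[R]_m :=
  \col_(e < m) (if e == est G then 1 else 0).

Definition absm p q (A : 'M[R]_(p, q)) : 'M[R]_(p, q) := map_mx Num.norm A.

Definition hsq p (v : 'cV[R]_p) : 'cV[R]_p := \col_i (v i 0 ^+ 2).
Definition hmul p (u v : 'cV[R]_p) : 'cV[R]_p := \col_i (u i 0 * v i 0).
(* entrywise division u ./ v (Rocq convention x/0 = 0) *)
Definition hdiv p (u v : 'cV[R]_p) : 'cV[R]_p := \col_i (u i 0 / v i 0).

Definition vle p (u v : 'cV[R]_p) : Prop := forall i, u i 0 <= v i 0.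

Definition scal p (u v : 'cV[R]_p) : R := (u^T *m v) 0 0.

Variables (A : 'M[R]_(m, n)) (c : 'cV[R]_m) (g : 'cV[R]_n).

Definition primal_feasible (F : 'cV[R]_m) : Prop :=
  A^T *m F = 0 /\ vle ((absm A^T) *m hsq F) (hsq g).

Definition primal_optimal (F : 'cV[R]_m) : Prop :=
  primal_feasible F /\
  forall F', primal_feasible F' -> scal c F' <= scal c F.

Definition lagrangian (F : 'cV[R]_m) (lam nu : 'cV[R]_n) : R :=
  scal c F + scal nu (A^T *m F) - scal lam ((absm A^T) *m hsq F - hsq g).

Definition lagrange_dual (lam nu : 'cV[R]_n) : \bar R :=
  ereal_sup [set (lagrangian F lam nu)%:E | F in [set: 'cV[R]_m]].

(* a^2 / b, extended to b <= 0 by its lower-semicontinuous closure: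
   0 if a = 0 = b, +oo otherwise (i.e. the value of sup_x (a x - b x^2)*4 for b >= 0) *)
Definition qterm (a b : R) : \bar R :=
  if 0 < b then (a ^+ 2 / b)%:E else if a == 0 then 0%E else +oo%E.

Definition dual_obj (lam nu : 'cV[R]_n) : \bar R :=
  ((scal lam (hsq g))%:E +
   (4^-1)%:E * \sum_(e < m) qterm ((c + A *m nu) e ord0) ((absm A *m lam) e ord0))%E.

Definition dual_feasible (lam : 'cV[R]_n) : Prop := vle 0 lam.

Definition dual_optimal (lam nu : 'cV[R]_n) : Prop :=
  dual_feasible lam /\
  forall lam' nu', dual_feasible lam' -> (dual_obj lam nu <= dual_obj lam' nu')%E.

End Defs.

(* Main.v *)
Require Import Defs.
From HB Require Import structures.
From mathcomp Require Import all_boot all_order all_algebra.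
From mathcomp Require Import all_classical all_reals ereal.
From mathcomp Require Import topology normedtype derive.
From mathcomp Require Import ring lra.
From Stdlib Require List.
Import Order.TTheory GRing.Theory Num.Theory.
Import numFieldNormedType.Exports.
Local Open Scope ring_scope.

Section Farkas.
Variable R : realFieldType.
Variable N : nat.

Definition frow := (('I_N -> R) * R)%type.
Definition dotv (a x : 'I_N -> R) := \sum_j a j * x j.
Definition fsat (x : 'I_N -> R) (r : frow) := dotv r.1 x <= r.2.

Inductive cone (S : list frow) : ('I_N -> R) -> R -> Prop :=
 | cone0 : cone S (fun _ => 0) 0
 | coneS a b r l : List.In r S -> 0 <= l -> cone S a b ->
     cone S (fun j => a j + l * r.1 j) (b + l * r.2).

Lemma cone_add S a b a' b' : cone S a b -> cone S a' b' ->
  cone S (fun j => a j + a' j) (b + b').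
Proof.
move=> ha; elim => [|a1 b1 r l Hr hl _ IH].
  have -> : (fun j => a j + 0) = a by apply: funext => j; rewrite addr0.
  by rewrite addr0.
have -> : (fun j => a j + (a1 j + l * r.1 j)) = (fun j => (a j + a1 j) + l * r.1 j).
  by apply: funext => j; rewrite addrA.
by rewrite addrA; apply: coneS.
Qed.

Lemma cone_scale S a b l : 0 <= l -> cone S a b -> cone S (fun j => l * a j) (l * b).
Proof.
move=> hl; elim => [|a1 b1 r l1 Hr hl1 _ IH].
  have -> : (fun j : 'I_N => l * 0) = (fun _ => 0) by apply: funext => j; rewrite mulr0.
  by rewrite mulr0; apply: cone0.
have -> : (fun j => l * (a1 j + l1 * r.1 j)) = (fun j => l * a1 j + (l * l1) * r.1 j).
  by apply: funext => j; rewrite mulrDr mulrA.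
by rewrite mulrDr mulrA; apply: coneS => //; apply: mulr_ge0.
Qed.

Lemma cone_row S r : List.In r S -> cone S r.1 r.2.
Proof.
move=> Hr; have := @coneS S _ _ r 1 Hr (@ler01 R) (cone0 S).
have -> : (fun j => 0 + 1 * r.1 j) = r.1 by apply: funext => j; rewrite add0r mul1r.
by rewrite add0r mul1r.
Qed.

Lemma cone_mono S S' a b : (forall r, List.In r S' -> cone S r.1 r.2) ->
  cone S' a b -> cone S a b.
Proof.
move=> H; elim => [|a1 b1 r l Hr hl _ IH]; first exact: cone0.
by apply: cone_add => //; apply: cone_scale => //; apply: H.
Qed.

Definition upd (x : 'I_N -> R) k t := fun j => if j == k then t else x j.

Lemma dot_upd a x k t : dotv a (upd x k t) = dotv a (upd x k 0) + a k * t.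
Proof.
rewrite /dotv (bigD1 k) //= [in RHS](bigD1 k) //= /upd eqxx mulr0 add0r addrC.
congr (_ + _); apply: eq_bigr => j /negbTE ->; done.
Qed.

Lemma dot_lin (al be : R) a b x :
  dotv (fun j => al * a j + be * b j) x = al * dotv a x + be * dotv b x.
Proof.
rewrite /dotv !mulr_sumr -big_split /=; apply: eq_bigr => j _; ring.
Qed.

Lemma between (Ls Us : list R) :
  (forall l u, List.In l Ls -> List.In u Us -> l <= u) ->
  exists t, (forall l, List.In l Ls -> l <= t) /\ (forall u, List.In u Us -> t <= u).
Proof.
elim: Ls => [|l Ls IH] H.
  suff [t Ht] : exists t, forall u, List.In u Us -> t <= u by exists t.
  elim: Us {H} => [|u Us [t Ht]]; first by exists 0.
  exists (Num.min t u) => u' /= [<-|hu]; first by rewrite ge_min lexx orbT.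
  by rewrite ge_min Ht.
have [t [Hl Hu]] : exists t, (forall l, List.In l Ls -> l <= t) /\ (forall u, List.In u Us -> t <= u).
  by apply: IH => l' u hl hu; apply: H => //; right.
case: (lerP l t) => hlt.
  by exists t; split => // l' /= [<-|]; [done|exact: Hl].
exists l; split.
  by move=> l' /= [<-|/Hl hl']; [done|apply: le_trans hl' (ltW hlt)].
by move=> u hu; apply: H => //; left.
Qed.


Definition zrows k (S : list frow) := List.filter (fun r : frow => r.1 k == 0) S.
Definition prows k (S : list frow) := List.filter (fun r : frow => 0 < r.1 k) S.
Definition nrows k (S : list frow) := List.filter (fun r : frow => r.1 k < 0) S.
Definition comb k (p q : frow) : frow :=
  (fun j => (- q.1 k) * p.1 j + p.1 k * q.1 j, (- q.1 k) * p.2 + p.1 k * q.2).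
Definition elimS k S :=
  List.app (zrows k S) (List.flat_map (fun p => List.map (comb k p) (nrows k S)) (prows k S)).

Lemma elimS_inv k S r : List.In r (elimS k S) ->
  (List.In r S /\ r.1 k = 0) \/
  exists p q, [/\ List.In p S, List.In q S, 0 < p.1 k, q.1 k < 0 & r = comb k p q].
Proof.
rewrite /elimS List.in_app_iff => -[|].
  by rewrite List.filter_In => -[hr /eqP]; left.
rewrite List.in_flat_map => -[p [hp]]; rewrite List.in_map_iff => -[q [<- hq]].
move: hp hq; rewrite !List.filter_In => -[hp hpk] [hq hqk].
by right; exists p, q; split.
Qed.

Lemma div_cmp (a b p q : R) : 0 < p -> q < 0 -> q * b <= p * a -> a / q <= b / p.
Proof.
move=> hp hq h; rewrite -subr_ge0.
have -> : b / p - a / q = (p * a - q * b) / (p * (- q)).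
  by field; rewrite lt_eqF // gt_eqF.
by apply: divr_ge0; [rewrite subr_ge0 | apply: mulr_ge0; rewrite ?oppr_ge0 ltW].
Qed.

Lemma elim_lift k S x : (forall r, List.In r (elimS k S) -> fsat x r) ->
  exists x', forall r, List.In r S -> fsat x' r.
Proof.
move=> H.
set y := upd x k 0.
have Hk : forall r, List.In r (elimS k S) -> r.1 k = 0.
  move=> r /elimS_inv [[_ ->]//|[p [q [_ _ _ _ ->]]]] /=; ring.
have Hy : forall r, List.In r (elimS k S) -> dotv r.1 y <= r.2.
  move=> r hr; have := H r hr; rewrite /fsat.
  have -> : x = upd x k (x k) by apply: funext => j; rewrite /upd; case: eqP => // ->.
  by rewrite dot_upd Hk // mul0r addr0 /y /upd; congr (_ <= _); apply: eq_bigr => j _;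
     case: eqP.
pose rest (r : frow) := r.2 - dotv r.1 y.
case: (@between (List.map (fun q : frow => rest q / q.1 k) (nrows k S))
   (List.map (fun p : frow => rest p / p.1 k) (prows k S))) => [l u|t [Ht1 Ht2]].
   rewrite !List.in_map_iff => -[q [<- hq]] [p [<- hp]].
  move: hp hq; rewrite !List.filter_In => -[hp hpk] [hq hqk].
  apply: div_cmp => //.
  have hc : List.In (comb k p q) (elimS k S).
    rewrite /elimS List.in_app_iff; right; rewrite List.in_flat_map; exists p; split.
      by rewrite List.filter_In.
    by rewrite List.in_map_iff; exists q; split => //; rewrite List.filter_In.
  have := Hy _ hc; rewrite /comb /= dot_lin /rest => h.
  rewrite -subr_ge0; rewrite -subr_ge0 in h.
  have -> : p.1 k * (q.2 - dotv q.1 y) - q.1 k * (p.2 - dotv p.1 y) =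
     - q.1 k * p.2 + p.1 k * q.2 - (- q.1 k * dotv p.1 y + p.1 k * dotv q.1 y) by ring.
  exact: h.
have yk : upd y k 0 = y by apply: funext => j; rewrite /y /upd; case: eqP.
exists (upd y k t) => r hr; rewrite /fsat dot_upd yk.
case: (ltgtP (r.1 k) 0) => hrk.
- have : rest r / r.1 k <= t.
    apply: Ht1; rewrite List.in_map_iff; exists r; split => //; rewrite List.filter_In; split => //.
  rewrite ler_ndivrMr // /rest mulrC => h; rewrite addrC -lerBrDr; exact: h.
- have : t <= rest r / r.1 k.
    apply: Ht2; rewrite List.in_map_iff; exists r; split => //; rewrite List.filter_In; split => //.
  rewrite ler_pdivlMr // /rest mulrC => h; rewrite addrC -lerBrDr; exact: h.
- rewrite hrk mul0r addr0; apply: Hy; rewrite /elimS List.in_app_iff; left.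
  by rewrite List.filter_In; split => //; rewrite hrk eqxx.
Qed.

Lemma FM_ind k : (k <= N)%N -> forall S : list frow,
  (forall r, List.In r S -> forall j : 'I_N, (k <= j)%N -> r.1 j = 0) ->
  (forall x, ~ (forall r, List.In r S -> fsat x r)) ->
  exists b, b < 0 /\ cone S (fun _ => 0) b.
Proof.
elim: k => [_|k IH hk] S Hs Hinf.
  case E : (List.existsb (fun r : frow => r.2 < 0) S).
    move: E => /List.existsb_exists [r [hr hr2]]; exists r.2; split => //.
    have := @cone_row S r hr.
    by have -> : r.1 = (fun _ => 0) by apply: funext => j; apply: Hs.
  exfalso; apply: (Hinf (fun _ => 0)) => r hr; rewrite /fsat /dotv big1; last by move=> j _; rewrite mulr0.
  rewrite leNgt; apply/negP => h.
  have : List.existsb (fun r : frow => r.2 < 0) S by apply/List.existsb_exists; exists r.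
  by rewrite E.
have kN : (k < N)%N by [].
pose ko := Ordinal kN.
have [b [hb hc]] : exists b, b < 0 /\ cone (elimS ko S) (fun _ => 0) b.
  apply: IH; first exact: ltnW.
    move=> r /elimS_inv [[hr hr0] j hj|[p [q [hp hq _ _ ->]]] j hj].
      case: (eqVneq j ko) => [->//|hne]; apply: (Hs _ hr).
      have hjk : (val j != k) by apply: contra_neq hne => h; apply: val_inj.
      by rewrite ltn_neqAle eq_sym hjk hj.
    rewrite /comb /=.
    case: (eqVneq j ko) => [->|hne]; first by ring.
    have hjk : (val j != k) by apply: contra_neq hne => h; apply: val_inj.
    have hj' : (k < j)%N by rewrite ltn_neqAle eq_sym hjk hj.
    by rewrite (Hs _ hp j hj') (Hs _ hq j hj'); ring.
  move=> x hx; have [x' hx'] := @elim_lift ko S x hx; exact: (Hinf x' hx').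
exists b; split => //; apply: cone_mono hc => r /elimS_inv [[hr _]|[p [q [hp hq hpk hqk ->]]]].
  exact: cone_row.
apply: cone_add; apply: cone_scale; rewrite ?oppr_ge0 ?ltW //; exact: cone_row.
Qed.

Theorem farkas (S : list frow) :
  (forall x, ~ (forall r, List.In r S -> fsat x r)) ->
  exists b, b < 0 /\ cone S (fun _ => 0) b.
Proof.
apply: (@FM_ind N (leqnn N)) => r _ j hj.
by have := ltn_ord j; rewrite ltnNge hj.
Qed.
End Farkas.

Section S.
Variable R : realType.
Variables n m : nat.
Variables (A : 'M[R]_(m, n)) (c : 'cV[R]_m) (g : 'cV[R]_n).

Definition av (nu : 'cV[R]_n) e := c e 0 + \sum_k A e k * nu k 0.
Definition bv (lam : 'cV[R]_n) e := \sum_k `|A e k| * lam k 0.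
Definition hv (F : 'cV[R]_m) i := \sum_e `|A e i| * F e 0 ^+ 2.
Definition lg2 (lam : 'cV[R]_n) := \sum_i lam i 0 * g i 0 ^+ 2.

Lemma scalE p (u v : 'cV[R]_p) : scal u v = \sum_i u i 0 * v i 0.
Proof. by rewrite /scal !mxE; apply: eq_bigr => i _; rewrite !mxE. Qed.

Lemma ATF (F : 'cV[R]_m) k : (A^T *m F) k 0 = \sum_e A e k * F e 0.
Proof. by rewrite !mxE; apply: eq_bigr => i _; rewrite !mxE. Qed.

Lemma absATF (F : 'cV[R]_m) i : (absm A^T *m hsq F) i 0 = hv F i.
Proof. by rewrite !mxE; apply: eq_bigr => e _; rewrite !mxE. Qed.

Lemma lagr_dec F lam nu : lagrangian A c g F lam nu =
  lg2 lam + \sum_e (av nu e * F e 0 - bv lam e * F e 0 ^+ 2).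
Proof.
rewrite /lagrangian !scalE /lg2 /av /bv.
have E2 : \sum_k nu k 0 * (A^T *m F) k 0 = \sum_e (\sum_k A e k * nu k 0) * F e 0.
  under eq_bigr => k _ do rewrite ATF mulr_sumr.
  rewrite exchange_big /=; apply: eq_bigr => e _; rewrite mulr_suml.
  by apply: eq_bigr => k _; ring.
have E3 : \sum_i lam i 0 * (absm A^T *m hsq F - hsq g) i 0 =
   \sum_e (\sum_k `|A e k| * lam k 0) * F e 0 ^+ 2 - \sum_i lam i 0 * g i 0 ^+ 2.
  under eq_bigr => i _ do rewrite mxE [X in _ * (X + _)]absATF /hv !mxE mulrBr mulr_sumr.
  rewrite sumrB exchange_big /=; congr (_ - _); apply: eq_bigr => e _; rewrite mulr_suml.
  by apply: eq_bigr => k _; ring.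
rewrite E2 E3.
rewrite [X in _ = _ + X](_ : _ = \sum_e c e 0 * F e 0 + \sum_e (\sum_k A e k * nu k 0) * F e 0
   - \sum_e (\sum_k `|A e k| * lam k 0) * F e 0 ^+ 2); first by ring.
by rewrite -big_split -sumrB /=; apply: eq_bigr => e _; ring.
Qed.

Lemma aE nu e : (c + A *m nu) e ord0 = av nu e.
Proof. by rewrite !mxE /av. Qed.
Lemma bE lam e : (absm A *m lam) e ord0 = bv lam e.
Proof. by rewrite !mxE /bv; apply: eq_bigr => k _; rewrite !mxE. Qed.

Definition qf (a b : R) := if 0 < b then a ^+ 2 / b else 0.

Lemma phi_bound (a b x : R) : 0 <= b -> (b = 0 -> a = 0) ->
  a * x - b * x ^+ 2 <= 4^-1 * qf a b.
Proof.
move=> b0 ab; rewrite /qf; case: ifPn => bp.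
  rewrite -subr_ge0.
  have -> : 4^-1 * (a ^+ 2 / b) - (a * x - b * x ^+ 2) = (a - 2 * b * x) ^+ 2 / (4 * b).
    by field; rewrite gt_eqF.
  by rewrite divr_ge0 ?sqr_ge0 // mulr_ge0.
have b00 : b = 0 by apply/eqP; rewrite eq_le b0 andbT leNgt.
by rewrite b00 ab // !mul0r subr0 mulr0.
Qed.

Definition xstar (a b : R) := if 0 < b then a / (2 * b) else 0.

Lemma phi_eq (a b : R) : 0 <= b -> (b = 0 -> a = 0) ->
  a * xstar a b - b * xstar a b ^+ 2 = 4^-1 * qf a b.
Proof.
move=> b0 ab; rewrite /qf /xstar; case: ifPn => bp.
  by field; rewrite gt_eqF.
by rewrite expr0n /= !mulr0 subr0.
Qed.

Lemma bv_ge0 lam e : vle 0 lam -> 0 <= bv lam e.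
Proof.
move=> hl; apply: sumr_ge0 => k _; apply: mulr_ge0 => //.
by have := hl k; rewrite mxE.
Qed.

Lemma part1 lam nu : vle 0 lam -> lagrange_dual A c g lam nu = dual_obj A c g lam nu.
Proof.
move=> hl; rewrite /dual_obj.
under eq_bigr => e _ do rewrite aE bE.
have lgE : scal lam (hsq g) = lg2 lam.
  by rewrite scalE /lg2; apply: eq_bigr => i _; rewrite mxE.
rewrite lgE.
case: (boolP [exists e, (bv lam e == 0) && (av nu e != 0)]) => [/existsP [e0 /andP [/eqP b0 a0]]|hfin].
- have -> : (\sum_e qterm (av nu e) (bv lam e) = +oo)%E.
    apply/esum_eqyP.
      move=> e _; rewrite /qterm; case: ifP => //; case: ifP => //.
    exists e0; split => //.
    by rewrite /qterm b0 ltxx (negbTE a0).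
  rewrite mulry gtr0_sg ?invr_gt0 ?ltr0n // mul1e addey //.
  have H : forall M : R, (M%:E <= lagrange_dual A c g lam nu)%E.
    move=> M.
    pose x := (M - lg2 lam) / av nu e0.
    pose F : 'cV[R]_m := \col_e (if e == e0 then x else 0).
    apply: le_ereal_sup_tmp; exists (lagrangian A c g F lam nu)%:E.
      by exists F.
    rewrite lee_fin lagr_dec (bigD1 e0) //= big1; last first.
      by move=> e /negbTE ne; rewrite /F mxE ne mulr0 expr0n /= mulr0 subr0.
    rewrite /F mxE eqxx b0 mul0r subr0 addr0 /x mulrC divfK //.
    by rewrite addrC subrK.
  case E : (lagrange_dual A c g lam nu) => [r| |] //.
    by have := H (r + 1); rewrite E lee_fin -subr_ge0 opprD addrA subrr sub0r oppr_ge0 ler10.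
  by have := H 0; rewrite E.
- have hab : forall e, bv lam e = 0 -> av nu e = 0.
    move=> e be; apply/eqP; apply: contraNT hfin => ha; apply/existsP; exists e.
    by rewrite be eqxx.
  have -> : (\sum_e qterm (av nu e) (bv lam e) = (\sum_e qf (av nu e) (bv lam e))%:E)%E.
    rewrite -sumEFin; apply: eq_bigr => e _; rewrite /qterm /qf; case: ifP => // bp.

    rewrite hab ?eqxx //; apply/eqP; rewrite eq_le bv_ge0 // andbT leNgt bp //.
  rewrite -EFinM -EFinD.
  have hb e := bv_ge0 lam e hl.
  apply/eqP; rewrite eq_le; apply/andP; split.
    apply: ge_ereal_sup => y [F _ <-]; rewrite lee_fin lagr_dec lerD2l mulr_sumr.
    by apply: ler_sum => e _; apply: phi_bound => //; exact: hab.
  pose F : 'cV[R]_m := \col_e xstar (av nu e) (bv lam e).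
  apply: le_ereal_sup_tmp; exists (lagrangian A c g F lam nu)%:E; first by exists F.
  rewrite lee_fin lagr_dec lerD2l mulr_sumr le_eqVlt; apply/orP; left; apply/eqP.
  by apply: eq_bigr => e _; rewrite /F mxE phi_eq //; exact: hab.
Qed.
End S.

Local Open Scope classical_set_scope.
Section Topo.
Variable R : realType.
Variables n m : nat.
Variables (A : 'M[R]_(m, n)) (c : 'cV[R]_m) (g : 'cV[R]_n).
Hypothesis hA : forall e, exists i, `|A e i| = 1.

Lemma cont_sum (T : topologicalType) (I : Type) (r : seq I) (f : I -> T -> R) :
  (forall i, continuous (f i)) -> continuous (fun x => \sum_(i <- r) f i x).
Proof.
move=> hf; elim: r => [|i r IH].
  have -> : (fun x => \sum_(i <- [::]) f i x) = (fun=> 0) by apply: funext => x; rewrite big_nil.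
  exact: cst_continuous.
have -> : (fun x => \sum_(j <- i :: r) f j x) = (f i + (fun x => \sum_(j <- r) f j x)).
  by apply: funext => x; rewrite big_cons.
by move=> x; apply: continuousD; [apply: hf | apply: IH].
Qed.

Lemma feasE F : primal_feasible A g F <->
  (forall k, \sum_e A e k * F e 0 = 0) /\ (forall i, \sum_e `|A e i| * F e 0 ^+ 2 <= g i 0 ^+ 2).
Proof.
rewrite /primal_feasible /vle; split.
  move=> [h1 h2]; split.
    move=> k; have := congr1 (fun M : 'cV[R]_n => M k 0) h1; rewrite !mxE => h.
    by rewrite -[RHS]h; apply: eq_bigr => e _; rewrite !mxE.
  move=> i; have := h2 i; rewrite !mxE; congr (_ <= _); apply: eq_bigr => e _; rewrite !mxE.
  done.
move=> [h1 h2]; split.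
  apply/matrixP => k j; rewrite (ord1 j) !mxE -[RHS](h1 k).
  by apply: eq_bigr => e _; rewrite !mxE.
move=> i; have := h2 i; rewrite !mxE; congr (_ <= _); apply: eq_bigr => e _; rewrite !mxE.
done.
Qed.

Definition fk k (v : 'rV[R]_m) := \sum_e A e k * v ord0 e.
Definition hi i (v : 'rV[R]_m) := \sum_e `|A e i| * v ord0 e ^+ 2.
Definition Pset := [set v : 'rV[R]_m | (forall k, fk k v = 0) /\ (forall i, hi i v <= g i 0 ^+ 2)].

Lemma coordc e : continuous (fun v : 'rV[R]_m => v ord0 e).
Proof. exact: coord_continuous. Qed.

Lemma fk_cont k : continuous (fk k).
Proof.
apply: cont_sum => e x; apply: continuousM; first exact: cst_continuous.
exact: coordc.
Qed.

Lemma hi_cont i : continuous (hi i).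
Proof.
have -> : hi i = (fun v : 'rV[R]_m => \sum_e `|A e i| * (v ord0 e * v ord0 e)).
  by apply: funext => v; rewrite /hi; apply: eq_bigr => e _; rewrite expr2.
apply: cont_sum => e x; apply: (@continuousM _ _ (fun=> `|A e i|) (fun v : 'rV[R]_m => v ord0 e * v ord0 e)); first exact: cst_continuous.
by apply: continuousM; exact: coordc.
Qed.

Lemma Pset_closed : closed Pset.
Proof.
have -> : Pset = (\bigcap_(k in setT) (fk k @^-1` [set 0])) `&`
                 (\bigcap_(i in setT) (hi i @^-1` [set x | x <= g i 0 ^+ 2])).
  apply/seteqP; split => v /=.
    by move=> [h1 h2]; split => j _ /=; [apply: h1 | apply: h2].
  by move=> [h1 h2]; split => j; [apply: h1 | apply: h2].
apply: closedI; apply: closed_bigI => j _; apply: preimage_closed.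
- by move=> v _; apply: fk_cont.
- exact: closed_eq.
- by move=> v _; apply: hi_cont.
- exact: closed_le.
Qed.


Lemma sq_le_hi (v : 'rV[R]_m) e i : `|A e i| = 1 -> v ord0 e ^+ 2 <= hi i v.
Proof.
move=> h; rewrite /hi (bigD1 e) //= h mul1r lerDl.
by apply: sumr_ge0 => j _; apply: mulr_ge0; rewrite ?sqr_ge0.
Qed.

Lemma primal_exists : exists F, primal_optimal A c g F.
Proof.
pose M := \sum_i `|g i 0|.
have PB : Pset `<=` [set v : 'rV[R]_m | forall e, `[-M, M]%classic (v ord0 e)].
  move=> v [h1 h2] e; have [i hi1] := hA e.
  have h3 : v ord0 e ^+ 2 <= g i 0 ^+ 2 := le_trans (@sq_le_hi v e i hi1) (h2 i).
  have h4 : `|v ord0 e| <= `|g i 0|.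
    by rewrite -ler_sqr ?nnegrE ?normr_ge0 // -!normrX !ger0_norm ?sqr_ge0.
  have h5 : `|g i 0| <= M.
    by rewrite /M (bigD1 i) //= lerDl; apply: sumr_ge0 => j _.
  by rewrite /= in_itv /= -ler_norml; apply: le_trans h5.
have cB : compact [set v : 'rV[R]_m | forall e, `[-M, M]%classic (v ord0 e)].
  by apply: (@rV_compact _ _ (fun=> `[-M, M]%classic)) => _; apply: segment_compact.
have cP : compact Pset := subclosed_compact Pset_closed cB PB.
have P0 : Pset !=set0.
  exists 0; split => [k|i]; rewrite /fk /hi.
    by rewrite big1 // => e _; rewrite mxE mulr0.
  by rewrite big1 ?sqr_ge0 // => e _; rewrite mxE expr0n /= mulr0.
pose f (v : 'rV[R]_m) := \sum_e c e 0 * v ord0 e.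
have fc : continuous f.
  by apply: cont_sum => e x; apply: continuousM; [exact: cst_continuous | exact: coordc].
have [v vP vmax] := compact_EVT_max P0 cP (continuous_subspaceT fc).
have toP : forall F, primal_feasible A g F <-> Pset F^T.
  move=> F; rewrite feasE /Pset /fk /hi /=.
  have E1 j : \sum_e A e j * F^T ord0 e = \sum_e A e j * F e 0.
    by apply: eq_bigr => e _; rewrite mxE.
  have E2 j : \sum_e `|A e j| * F^T ord0 e ^+ 2 = \sum_e `|A e j| * F e 0 ^+ 2.
    by apply: eq_bigr => e _; rewrite mxE.
  by split => -[h1 h2]; split => j; rewrite ?E1 ?E2 ?h1 ?h2 //; rewrite -?E1 -?E2 ?h1 ?h2.
have fE : forall F : 'cV[R]_m, scal c F = f F^T.
  by move=> F; rewrite /scal /f !mxE; apply: eq_bigr => e _; rewrite !mxE.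
exists v^T; split.
  by apply/toP; rewrite trmxK; move: vP; rewrite inE.
move=> F' /toP hF'; rewrite !fE trmxK; apply: vmax; rewrite inE //.
Qed.
End Topo.

Arguments hv {R n m}. Arguments av {R n m}. Arguments bv {R n m}. Arguments lg2 {R n}.
Arguments lagr_dec {R n m}. Arguments part1 {R n m}. Arguments feasE {R n m}.
Arguments scalE {R}. Arguments absATF {R n m}. Arguments ATF {R n m}. Arguments bv_ge0 {R n m}. Arguments aE {R n m}. Arguments bE {R n m}.

Section K.
Variable R : realType.
Variables n m : nat.
Variables (A : 'M[R]_(m, n)) (c : 'cV[R]_m) (g : 'cV[R]_n).
Hypothesis hg : forall i, 0 < g i 0.

Lemma sum_delta p (f : 'I_p -> R) k l : \sum_j f j * (if j == k then l else 0) = f k * l.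
Proof. by rewrite (bigD1 k) //= eqxx big1 ?addr0 // => j /negbTE ->; rewrite mulr0. Qed.

Lemma fold_min (tau : 'I_n -> R) (s : seq 'I_n) : (forall i, 0 < tau i) ->
  let t := foldr (fun i acc => Num.min (tau i) acc) 1 s in
  0 < t /\ forall i, i \in s -> t <= tau i.
Proof.
move=> ht; elim: s => [|j s [IH1 IH2]] /=; first by split => //; rewrite ltr01.
split; first by rewrite lt_min ht IH1.
move=> i; rewrite inE => /orP [/eqP ->|hi]; first by rewrite ge_min lexx.
by rewrite ge_min IH2 // orbT.
Qed.

Lemma no_improve F (D : 'I_m -> R) : primal_optimal A c g F ->
  (forall k, \sum_e A e k * D e = 0) ->
  (forall i, hv A F i = g i 0 ^+ 2 -> \sum_e `|A e i| * F e 0 * D e <= 0) ->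
  1 <= \sum_e c e 0 * D e -> False.
Proof.
move=> [hF hopt] hA0 hact hc.
have [hF1 hF2] := (feasE A g F).1 hF.
set cF := \sum_e c e 0 * F e 0.
pose eps := (2 * (`|cF| + 1))^-1.
have eps0 : 0 < eps by rewrite invr_gt0 mulr_gt0 // ltr_pwDr.
have epscF : eps * cF <= 2^-1.
  have h1 : eps * cF <= eps * (`|cF| + 1).
    by rewrite ler_pM2l // (le_trans (ler_norm _)) // lerDl.
  apply: (le_trans h1); rewrite le_eqVlt; apply/orP; left; apply/eqP.
  by rewrite /eps; field; rewrite gt_eqF // ltr_pwDr.
pose D' e := D e - eps * F e 0.
pose al i := \sum_e `|A e i| * F e 0 * D' e.
pose be i := \sum_e `|A e i| * D' e ^+ 2.
pose s i := g i 0 ^+ 2 - hv A F i.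
have s0 i : 0 <= s i by rewrite subr_ge0; apply: hF2.
have be0 i : 0 <= be i by apply: sumr_ge0 => e _; apply: mulr_ge0; rewrite ?sqr_ge0.
have alact i : s i = 0 -> al i < 0.
  move=> /eqP; rewrite subr_eq0 => /eqP hact'.
  have -> : al i = \sum_e `|A e i| * F e 0 * D e - eps * hv A F i.
    rewrite /al /hv mulr_sumr -sumrB; apply: eq_bigr => e _; rewrite /D'; ring.
  rewrite -hact' subr_lt0; apply: le_lt_trans (hact i (esym hact')) _.
  by rewrite mulr_gt0 // exprn_gt0.
pose tau i := if 0 < s i then Num.min 1 (s i / (2 * `|al i| + be i + 1))
              else - 2 * al i / (be i + 1).
have K0 i : 0 < 2 * `|al i| + be i + 1.
  by rewrite ltr_wpDl // addr_ge0 // mulr_ge0.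
have tau0 i : 0 < tau i.
  rewrite /tau; case: ifPn => hs.
    by rewrite lt_min ltr01 divr_gt0.
  have si0 : s i = 0 by apply/eqP; rewrite eq_le s0 andbT leNgt.
  by rewrite divr_gt0 ?ltr_wpDl // mulNr mulrC -mulNr mulr_gt0 // oppr_gt0 alact.
have tauok i t : 0 < t -> t <= tau i -> 2 * t * al i + t ^+ 2 * be i <= s i.
  move=> t0; rewrite /tau; case: ifPn => hs.
    rewrite le_min => /andP [t1 t2].
    move: t2; rewrite ler_pdivlMr // => t2.
    have h1 : al i <= `|al i| := ler_norm _.
    have h2 : t ^+ 2 * be i <= t * be i.
      by rewrite expr2 -mulrA ler_pM2l // ler_piMl.
    have h3 : 2 * t * al i <= 2 * t * `|al i| by rewrite ler_pM2l // mulr_gt0.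
    apply: le_trans t2; apply: le_trans (lerD h3 h2) _.
    lra.
  have si0 : s i = 0 by apply/eqP; rewrite eq_le s0 andbT leNgt.
  rewrite si0 ler_pdivlMr ?ltr_wpDl // => ht.
  have : t * be i <= - 2 * al i - t by lra.
  move=> h; have hal := alact i si0.
  have : 2 * al i + t * be i <= 0 by lra.
  move=> h'; have : t * (2 * al i + t * be i) <= 0 by rewrite pmulr_rle0.
  by rewrite mulrDr !mulrA expr2 [t * 2]mulrC.
pose t := foldr (fun i acc => Num.min (tau i) acc) 1 (enum 'I_n).
have [t0 tle] := @fold_min tau (enum 'I_n) tau0.
have tle' i : t <= tau i by apply: tle; rewrite mem_enum.
pose Ft : 'cV[R]_m := \col_e (F e 0 + t * D' e).
have hFt : primal_feasible A g Ft.
  apply/(feasE A g Ft); split.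
    move=> k; have -> : \sum_e A e k * Ft e 0 =
      \sum_e A e k * F e 0 + t * \sum_e A e k * D e - t * eps * \sum_e A e k * F e 0.
      rewrite !mulr_sumr -big_split -sumrB /=; apply: eq_bigr => e _; rewrite mxE /D'; ring.
    by rewrite hF1 hA0; ring.
  move=> i; have -> : \sum_e `|A e i| * Ft e 0 ^+ 2 = hv A F i + (2 * t * al i + t ^+ 2 * be i).
    rewrite /hv /al /be !mulr_sumr -!big_split /=; apply: eq_bigr => e _; rewrite mxE; ring.
  by rewrite -lerBrDl; apply: tauok.
have := hopt Ft hFt; rewrite !scalE.
have -> : \sum_i c i 0 * Ft i 0 = cF + t * (\sum_e c e 0 * D e - eps * cF).
  rewrite /cF mulrBr mulr_sumr mulrA mulr_sumr -sumrB -big_split /=.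
  by apply: eq_bigr => e _; rewrite mxE /D'; ring.
apply/negP; rewrite -ltNge ltrDl pmulr_rgt0 // subr_gt0.
apply: le_lt_trans epscF _; apply: lt_le_trans hc.
by rewrite invf_lt1 // ltr1n.
Qed.


Lemma In_mem (T : eqType) (s : seq T) x : x \in s -> List.In x s.
Proof. by elim: s => [|y s IH] //=; rewrite inE => /orP [/eqP ->|/IH]; [left|right]. Qed.

Definition act F i := hv A F i == g i 0 ^+ 2.
Definition rA k : frow R m := (fun e => A e k, 0).
Definition rAn k : frow R m := (fun e => - A e k, 0).
Definition rH (F : 'cV[R]_m) i : frow R m := (fun e => `|A e i| * F e 0, 0).
Definition rc : frow R m := (fun e => - c e 0, -1).
Definition Srows F := List.app (List.map rA (enum 'I_n))
  (List.app (List.map rAn (enum 'I_n))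
   (List.app (List.map (rH F) (List.filter (act F) (enum 'I_n))) (rc :: nil))).

Lemma infeas F : primal_optimal A c g F ->
  forall x, ~ (forall r, List.In r (Srows F) -> fsat R m x r).
Proof.
move=> hopt x H.
have inE1 k : List.In (rA k) (Srows F).
  by apply/List.in_app_iff; left; apply/List.in_map_iff; exists k; split => //; apply: In_mem; rewrite mem_enum.
have inE2 k : List.In (rAn k) (Srows F).
  apply/List.in_app_iff; right; apply/List.in_app_iff; left.
  by apply/List.in_map_iff; exists k; split => //; apply: In_mem; rewrite mem_enum.
have inE3 i : act F i -> List.In (rH F i) (Srows F).
  move=> hi; apply/List.in_app_iff; right; apply/List.in_app_iff; right; apply/List.in_app_iff; left.
  apply/List.in_map_iff; exists i; split => //; apply/List.filter_In; split => //.
  by apply: In_mem; rewrite mem_enum.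
have inE4 : List.In rc (Srows F).
  by apply/List.in_app_iff; right; apply/List.in_app_iff; right; apply/List.in_app_iff; right; left.
apply: (@no_improve F x hopt).
- move=> k; have h1 := H _ (inE1 k); have h2 := H _ (inE2 k).
  move: h1 h2; rewrite /fsat /dotv /= => h1 h2.
  apply/eqP; rewrite eq_le h1 /= -oppr_le0 -sumrN.
  by apply: le_trans h2; rewrite le_eqVlt; apply/orP; left; apply/eqP; apply: eq_bigr => e _; rewrite mulNr.
- move=> i hi; have := H _ (inE3 i (introT eqP hi)); rewrite /fsat /dotv /=.
  by [].
- have := H _ inE4; rewrite /fsat /dotv /= => h.
  rewrite -lerN2 -sumrN; apply: le_trans h; rewrite le_eqVlt; apply/orP; left; apply/eqP.
  by apply: eq_bigr => e _; rewrite mulNr.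
Qed.

Lemma cone_inv F a b : cone R m (Srows F) a b ->
  exists (w mu : 'I_n -> R) (y0 : R),
  [/\ forall i, 0 <= mu i, forall i, mu i != 0 -> act F i, 0 <= y0,
      forall e, a e = \sum_k A e k * w k + (\sum_i mu i * `|A e i|) * F e 0 - y0 * c e 0
    & b = - y0].
Proof.
elim => [|a1 b1 r l hr hl _ [w [mu [y0 [hmu hsupp hy0 ha hb]]]]].
  exists (fun=> 0), (fun=> 0), 0; split => //.
  - by move=> i; rewrite eqxx.
  - by move=> e; rewrite !big1 ?mul0r ?mulr0 ?subr0 ?addr0 // => k _; rewrite ?mulr0 ?mul0r.
  by rewrite oppr0.
move: hr; rewrite /Srows => /List.in_app_iff [|/List.in_app_iff [|/List.in_app_iff [|[|[]]]]].
- move=> /List.in_map_iff [k [<- _]] /=.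
  exists (fun j => w j + (if j == k then l else 0)), mu, y0; split => //; last by rewrite hb mulr0 addr0.
  move=> e; rewrite ha.
  have -> : \sum_j A e j * (w j + (if j == k then l else 0)) = \sum_j A e j * w j + A e k * l.
    by rewrite -sum_delta -big_split /=; apply: eq_bigr => j _; rewrite mulrDr.
  ring.
- move=> /List.in_map_iff [k [<- _]] /=.
  exists (fun j => w j + (if j == k then - l else 0)), mu, y0; split => //; last by rewrite hb mulr0 addr0.
  move=> e; rewrite ha.
  have -> : \sum_j A e j * (w j + (if j == k then - l else 0)) = \sum_j A e j * w j + A e k * - l.
    by rewrite -sum_delta -big_split /=; apply: eq_bigr => j _; rewrite mulrDr.
  ring.
- move=> /List.in_map_iff [i [<- /List.filter_In [_ hai]]] /=.
  exists w, (fun j => mu j + (if j == i then l else 0)), y0; split => //; last by rewrite hb mulr0 addr0.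
  + by move=> j; apply: addr_ge0 => //; case: ifP.
  + move=> j; case: (eqVneq j i) => [->|hne] //; rewrite addr0; exact: hsupp.
  move=> e; rewrite ha.
  have -> : \sum_j (mu j + (if j == i then l else 0)) * `|A e j| =
            \sum_j mu j * `|A e j| + `|A e i| * l.
    rewrite -(@sum_delta n (fun j => `|A e j|)) -big_split /=; apply: eq_bigr => j _; rewrite mulrDl; congr (_ + _).
    by rewrite mulrC.
  ring.
- move=> <- /=; exists w, mu, (y0 + l); split => //; first by rewrite addr_ge0.
    by move=> e; rewrite ha; ring.
  by rewrite hb; ring.
Qed.

Lemma kkt F : primal_optimal A c g F -> exists lam nu : 'cV[R]_n,
  [/\ vle 0 lam, forall i, lam i 0 != 0 -> hv A F i = g i 0 ^+ 2
    & forall e, av A c nu e = 2 * bv A lam e * F e 0].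
Proof.
move=> hopt.
have [b [hb hcone]] := @farkas R m _ (@infeas F hopt).
have [w [mu [y0 [hmu hsupp hy0 ha hbe]]]] := @cone_inv F _ _ hcone.
have y0p : 0 < y0 by rewrite -oppr_lt0 -hbe.
have y0n : y0 != 0 by rewrite gt_eqF.
exists (\col_i (mu i / (2 * y0))), (\col_k (- (w k / y0))); split.
- by move=> i; rewrite !mxE divr_ge0 // mulr_ge0.
- move=> i; rewrite mxE => h; apply/eqP; apply: hsupp.
  by apply: contraNneq h => ->; rewrite mul0r.
- move=> e; have := ha e; set SW := \sum_k A e k * w k; set SM := \sum_i mu i * `|A e i|.
  move=> h0.
  have hc : y0 * c e 0 = SW + SM * F e 0 by move/eqP: h0; rewrite eq_sym subr_eq0 => /eqP <-.
  rewrite /av /bv.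
  have -> : \sum_k A e k * (\col_k (- (w k / y0))) k 0 = - SW / y0.
    rewrite /SW mulNr mulr_suml -sumrN; apply: eq_bigr => k _; rewrite mxE; ring.
  have -> : \sum_k `|A e k| * (\col_i (mu i / (2 * y0))) k 0 = SM / (2 * y0).
    rewrite /SM mulr_suml; apply: eq_bigr => k _; rewrite mxE; ring.
  rewrite -[c e 0](mulKf y0n) hc; field.
  by rewrite y0n.
Qed.

Lemma lagr_feasE (F : 'cV[R]_m) (lam nu : 'cV[R]_n) : primal_feasible A g F ->
  lagrangian A c g F lam nu = scal c F + \sum_i lam i 0 * (g i 0 ^+ 2 - hv A F i).
Proof.
move=> [h1 _]; rewrite /lagrangian h1.
have -> : scal nu (0 : 'cV[R]_n) = 0 by rewrite scalE big1 // => i _; rewrite mxE mulr0.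
rewrite addr0 [scal lam _]scalE; congr (_ + _).
rewrite -sumrN; apply: eq_bigr => i _; rewrite !mxE.
have -> : \sum_j absm A^T i j * hsq F j 0 = hv A F i by apply: eq_bigr => e _; rewrite !mxE.
ring.
Qed.

Lemma weak (F : 'cV[R]_m) (lam nu : 'cV[R]_n) : primal_feasible A g F -> vle 0 lam ->
  ((scal c F)%:E <= dual_obj A c g lam nu)%E.
Proof.
move=> hF hl; rewrite -part1 //; apply: le_ereal_sup_tmp.
exists (lagrangian A c g F lam nu)%:E; first by exists F.
rewrite lee_fin lagr_feasE // lerDl; apply: sumr_ge0 => i _; apply: mulr_ge0.
  by have := hl i; rewrite mxE.
by rewrite subr_ge0; have [_ +] := (feasE A g F).1 hF; apply.
Qed.

Lemma LF_eq (F : 'cV[R]_m) (lam nu : 'cV[R]_n) : primal_feasible A g F ->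
  (forall i, lam i 0 != 0 -> hv A F i = g i 0 ^+ 2) ->
  lagrangian A c g F lam nu = scal c F.
Proof.
move=> hF hcs; rewrite lagr_feasE // big1 ?addr0 // => i _.
by case: (eqVneq (lam i 0) 0) => [->|/hcs ->]; rewrite ?mul0r // subrr mulr0.
Qed.

Lemma kkt_upper (F : 'cV[R]_m) (lam nu : 'cV[R]_n) : primal_feasible A g F -> vle 0 lam ->
  (forall i, lam i 0 != 0 -> hv A F i = g i 0 ^+ 2) ->
  (forall e, av A c nu e = 2 * bv A lam e * F e 0) ->
  (dual_obj A c g lam nu <= (scal c F)%:E)%E.
Proof.
move=> hF hl hcs hst; rewrite -part1 //; apply: ge_ereal_sup => y [F' _ <-].
rewrite lee_fin -(@LF_eq F lam nu hF hcs) !lagr_dec lerD2l; apply: ler_sum => e _.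
rewrite hst; have hb := bv_ge0 A lam e hl.
rewrite -subr_ge0.
have -> : 2 * bv A lam e * F e 0 * F e 0 - bv A lam e * F e 0 ^+ 2 -
  (2 * bv A lam e * F e 0 * F' e 0 - bv A lam e * F' e 0 ^+ 2) =
  bv A lam e * (F e 0 - F' e 0) ^+ 2 by ring.
by apply: mulr_ge0; rewrite ?sqr_ge0.
Qed.

Lemma part3 (F : 'cV[R]_m) (lam nu : 'cV[R]_n) :
  primal_optimal A c g F -> dual_optimal A c g lam nu ->
  scal c F = 2 * scal lam (hsq g) /\
  hmul lam (absm A^T *m hsq (hdiv (c + A *m nu) (absm A *m lam)))
    = 4%:R *: hmul lam (hsq g).
Proof.
move=> hopt [hl hdo].
have hF := hopt.1.
have [lam0 [nu0 [hl0 hcs0 hst0]]] := @kkt F hopt.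
have hup : (dual_obj A c g lam nu <= (scal c F)%:E)%E.
  by apply: le_trans (hdo lam0 nu0 hl0) (@kkt_upper F lam0 nu0 hF hl0 hcs0 hst0).
have Lle F' : lagrangian A c g F' lam nu <= scal c F.
  rewrite -lee_fin; apply: le_trans hup; rewrite -part1 //.
  by apply: ereal_sup_ubound; exists F'.
have lam0i i : 0 <= lam i 0 by have := hl i; rewrite mxE.
have sge0 i : 0 <= g i 0 ^+ 2 - hv A F i.
  by rewrite subr_ge0; have [_ +] := (feasE A g F).1 hF; apply.
have CS i : lam i 0 * (g i 0 ^+ 2 - hv A F i) = 0.
  apply: (@psumr_eq0P _ _ xpredT (fun i => lam i 0 * (g i 0 ^+ 2 - hv A F i))) => //.
    by move=> j _; apply: mulr_ge0.
  apply/eqP; rewrite eq_le; apply/andP; split.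
    by have := Lle F; rewrite lagr_feasE // gerDl.
  by apply: sumr_ge0 => j _; apply: mulr_ge0.
have hcs i : lam i 0 != 0 -> hv A F i = g i 0 ^+ 2.
  move=> h; have := CS i; move/eqP; rewrite mulf_eq0 (negbTE h) /= subr_eq0 => /eqP ->.
  done.
have LF := @LF_eq F lam nu hF hcs.
have stat e : av A c nu e = 2 * bv A lam e * F e 0.
  set a := av A c nu e; set b := bv A lam e.
  have hb : 0 <= b := bv_ge0 A lam e hl.
  set d := a - 2 * b * F e 0.
  pose del := d / (b + 1).
  pose Fd : 'cV[R]_m := \col_j (F j 0 + (if j == e then del else 0)).
  have := Lle Fd; rewrite -LF !lagr_dec lerD2l (bigD1 e) //= [X in _ <= X](bigD1 e) //=.
  have -> : \sum_(i < m | i != e) (av A c nu i * Fd i 0 - bv A lam i * Fd i 0 ^+ 2) =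
            \sum_(i < m | i != e) (av A c nu i * F i 0 - bv A lam i * F i 0 ^+ 2).
    by apply: eq_bigr => j /negbTE hj; rewrite /Fd mxE hj addr0.
  rewrite lerD2r /Fd mxE eqxx -/a -/b => h.
  have h2 : d ^+ 2 / (b + 1) ^+ 2 <= 0.
    rewrite -subr_le0 in h; apply: le_trans h; rewrite le_eqVlt; apply/orP; left; apply/eqP.
    rewrite /del /d; field.
    by rewrite gt_eqF // ltr_wpDl.
  have hd : d ^+ 2 <= 0.
    by move: h2; rewrite pmulr_lle0 // invr_gt0 exprn_gt0 // ltr_wpDl.
  have : d = 0 by apply/eqP; rewrite -sqrf_eq0 eq_le hd sqr_ge0.
  by move/eqP; rewrite /d subr_eq0 => /eqP.
have lgE : scal lam (hsq g) = lg2 g lam.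
  by rewrite scalE /lg2; apply: eq_bigr => i _; rewrite mxE.
split.
  rewrite -LF lagr_dec lgE.
  under eq_bigr => e _ do rewrite stat.
  have -> : \sum_e (2 * bv A lam e * F e 0 * F e 0 - bv A lam e * F e 0 ^+ 2) =
            \sum_e bv A lam e * F e 0 ^+ 2 by apply: eq_bigr => e _; ring.
  have -> : \sum_e bv A lam e * F e 0 ^+ 2 = \sum_i lam i 0 * hv A F i.
    rewrite /bv /hv; under eq_bigr => e _ do rewrite mulr_suml.
    rewrite exchange_big /=; apply: eq_bigr => i _; rewrite mulr_sumr.
    by apply: eq_bigr => e _; ring.
  have -> : \sum_i lam i 0 * hv A F i = lg2 g lam.
    apply: eq_bigr => i _; have := CS i; rewrite mulrBr => /eqP; rewrite subr_eq0 => /eqP.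
    by move=> ->.
  ring.
apply/matrixP => i j; rewrite (ord1 j) !mxE.
case: (eqVneq (lam i 0) 0) => [->|hli]; first by rewrite !mul0r mulr0.
have hlp : 0 < lam i 0 by rewrite lt_def hli lam0i.
have -> : \sum_e absm A^T i e * hsq (hdiv (c + A *m nu) (absm A *m lam)) e 0 =
          4 * hv A F i.
  rewrite /hv mulr_sumr; apply: eq_bigr => e _; rewrite !mxE.
  have -> : (c e 0 + \sum_j A e j * nu j 0) = av A c nu e by [].
  have -> : \sum_j absm A e j * lam j 0 = bv A lam e.
    by apply: eq_bigr => k _; rewrite mxE.
  case: (eqVneq `|A e i| 0) => [->|hA]; first by rewrite !mul0r mulr0.
  have hbp : 0 < bv A lam e.
    have h1 : 0 < `|A e i| * lam i 0 by rewrite mulr_gt0 // lt_def hA normr_ge0.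
    rewrite /bv (bigD1 i) //=; apply: (lt_le_trans h1); rewrite lerDl.
    by apply: sumr_ge0 => k _; apply: mulr_ge0.
  rewrite stat; field; by rewrite gt_eqF.
by rewrite (hcs i hli); ring.
Qed.
End K.

Theorem proposition1 (R : realType) (n m : nat) (G : transport_graph n m)
    (g : 'cV[R]_n) (hg : forall i, 0 < g i 0) :
  let A : 'M[R]_(m, n) := incidence R G in
  let c : 'cV[R]_m := cvec R G in
  (* the Lagrange dual function is the displayed dual objective *)
  (forall lam nu : 'cV[R]_n, dual_feasible lam ->
     lagrange_dual A c g lam nu = dual_obj A c g lam nu) /\
  (* optimal solutions exist *)
  (exists (F : 'cV[R]_m) (lam nu : 'cV[R]_n),
     primal_optimal A c g F /\ dual_optimal A c g lam nu) /\
  (* every optimal triple (F, lam, nu) satisfies the value identity and the n equalities *)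
  (forall (F : 'cV[R]_m) (lam nu : 'cV[R]_n),
     primal_optimal A c g F -> dual_optimal A c g lam nu ->
     scal c F = 2 * scal lam (hsq g) /\
     hmul lam (absm A^T *m hsq (hdiv (c + A *m nu) (absm A *m lam)))
       = 4%:R *: hmul lam (hsq g)).
Proof.
move=> A c; split; first by move=> lam nu hl; apply: part1.
split; last by move=> F lam nu hF hd; apply: part3.
have hA : forall e, exists i, `|A e i| = 1.
  by move=> e; exists (tail G e); rewrite /A /incidence mxE eqxx normr1.
have [F hF] := @primal_exists R n m A c g hA.
have [lam [nu [hl hcs hst]]] := @kkt R n m A c g hg F hF.
exists F, lam, nu; split => //; split => // lam' nu' hl'.
apply: le_trans (@kkt_upper R n m A c g F lam nu hF.1 hl hcs hst) _.
exact: (@weak R n m A c g F lam' nu' hF.1 hl').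
Qed.
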